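(* Let $\alpha,\beta,\gamma\in\mathbb{C}$ with $\beta,\gamma\notin\{q^{-n}:n\in\mathbb{N}_0\}$. Then, as formal power series in $x,y$: (i) $\mathbf{H}_6(\alpha q;\beta;q,x,y)=\mathbf{H}_6(\alpha;\beta;q,x,y)+\frac{\alpha x(1-\alpha q)}{1-\beta}\mathbf{H}_6(\alpha q^2;\beta q;q,x,y)+\frac{\alpha xq(1-\alpha q)}{1-\beta}\mathbf{H}_6(\alpha q^2;\beta q;q,xq,y)+\frac{\alpha y}{1-\beta}\mathbf{H}_6(\alpha q;\beta q;q,xq^2,y)$; (ii) $\mathbf{H}_6(\alpha q;\beta;q,x,y)=\mathbf{H}_6(\alpha;\beta;q,x,y)+\frac{\alpha y}{1-\beta}\mathbf{H}_6(\alpha q;\beta q;q,x,y)+\frac{\alpha xq(1-\alpha q)}{1-\beta}\mathbf{H}_6(\alpha q^2;\beta q;q,xq,yq)+\frac{\alpha x(1-\alpha q)}{1-\beta}\mathbf{H}_6(\alpha q^2;\beta q;q,x,yq)$; (iii) $\mathbf{H}_7(\alpha q;\beta,\gamma;q,x,y)=\mathbf{H}_7(\alpha;\beta,\gamma;q,x,y)+\frac{\alpha x(1-\alpha q)}{1-\beta}\mathbf{H}_7(\alpha q^2;\beta q,\gamma;q,x,y)+\frac{\alpha xq(1-\alpha q)}{1-\beta}\mathbf{H}_7(\alpha q^2;\beta q,\gamma;q,xq,y)+\frac{\alpha y}{1-\gamma}\mathbf{H}_7(\alpha q;\beta,\gamma q;q,xq^2,y)$; (iv) $\mathbf{H}_7(\alpha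 q;\beta,\gamma;q,x,y)=\mathbf{H}_7(\alpha;\beta,\gamma;q,x,y)+\frac{\alpha y}{1-\gamma}\mathbf{H}_7(\alpha q;\beta,\gamma q;q,x,y)+\frac{\alpha xq(1-\alpha q)}{1-\beta}\mathbf{H}_7(\alpha q^2;\beta q,\gamma;q,xq,yq)+\frac{\alpha x(1-\alpha q)}{1-\beta}\mathbf{H}_7(\alpha q^2;\beta q,\gamma;q,x,yq)$.
   Context: Fix $q\in\mathbb{C}$ with $0<|q|<1$. For $a\in\mathbb{C}$ and $n\in\mathbb{N}_0$ the $q$-shifted factorial is $(a;q)_0=1$, $(a;q)_n=\prod_{k=0}^{n-1}(1-aq^k)$. For $\alpha\in\mathbb{C}$ and $\beta,\gamma\in\mathbb{C}\setminus\{q^{-n}:n\in\mathbb{N}_0\}$ the basic Horn functions are the double power series $\mathbf{H}_6(\alpha;\beta;q,x,y)=\sum_{r,s\ge0}\frac{(\alpha;q)_{2r+s}}{(\beta;q)_{r+s}(q;q)_r(q;q)_s}x^ry^s$ and $\mathbf{H}_7(\alpha;\beta,\gamma;q,x,y)=\sum_{r,s\ge0}\frac{(\alpha;q)_{2r+s}}{(\beta;q)_{r}(\gamma;q)_s(q;q)_r(q;q)_s}x^ry^s$. Expressions such as $\mathbf{H}_6(\alpha;\beta;q,xq,y)$ denote the series with $x$ replaced by $qx$ (and similarly for $y$). Identities are identities of formal power series in $x,y$ (equivalently of analytic functions near the origin). *)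

(* Defs.v *)
From HB Require Import structures.
From mathcomp Require Import all_boot all_order all_algebra.
From mathcomp Require Import reals.
From mathcomp.real_closed Require Import complex.
Set Implicit Arguments. Unset Strict Implicit. Unset Printing Implicit Defensive.
Import Order.TTheory GRing.Theory Num.Theory.
Local Open Scope ring_scope.

Section Defs.
Variable C : fieldType.

Definition qpoch (a q : C) (n : nat) : C := \prod_(k < n) (1 - a * q ^+ k).

(* formal power series in two variables x, y: coefficient of x^r y^s *)
Definition fps2 := nat -> nat -> C.

Definition fps2_add (F G : fps2) : fps2 := fun r s => F r s + G r s.
Definition fps2_scale (c : C) (F : fps2) : fps2 := fun r s => c * F r s.
(* x * F(x,y) *)
Definition fps2_mulx (F : fps2) : fps2 :=
  fun r s => if r is r'.+1 then F r' s else 0.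
(* y * F(x,y) *)
Definition fps2_muly (F : fps2) : fps2 :=
  fun r s => if s is s'.+1 then F r s' else 0.
(* F(c x, y) *)
Definition fps2_substx (c : C) (F : fps2) : fps2 := fun r s => c ^+ r * F r s.
(* F(x, c y) *)
Definition fps2_substy (c : C) (F : fps2) : fps2 := fun r s => c ^+ s * F r s.

Definition H6 (a b q : C) : fps2 := fun r s =>
  qpoch a q (2 * r + s) / (qpoch b q (r + s) * qpoch q q r * qpoch q q s).
Definition H7 (a b g q : C) : fps2 := fun r s =>
  qpoch a q (2 * r + s) / (qpoch b q r * qpoch g q s * qpoch q q r * qpoch q q s).
End Defs.

Infix "+f" := fps2_add (at level 50, left associativity).
Notation "c *f F" := (fps2_scale c F) (at level 40).

(* Main.v *)
Require Import Defs.
From HB Require Import structures.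
From mathcomp Require Import all_boot all_order all_algebra.
From mathcomp Require Import reals.
From mathcomp.real_closed Require Import complex.
From mathcomp Require Import zify ring.
From Stdlib Require Import FunctionalExtensionality.
Import Order.TTheory GRing.Theory Num.Theory.
Local Open Scope ring_scope.
Local Open Scope complex_scope.

Local Close Scope complex_scope.
Section Alg.
Variable C : fieldType.

Lemma qpochSl (x q : C) n : qpoch x q n.+1 = (1 - x) * qpoch (x * q) q n.
Proof.
rewrite /qpoch big_ord_recl /= expr0 mulr1; congr (_ * _).
by apply: eq_bigr => i _; rewrite /bump /= exprS mulrA.
Qed.

Lemma qpochSr (x q : C) n : qpoch x q n.+1 = qpoch x q n * (1 - x * q ^+ n).
Proof. by rewrite /qpoch big_ord_recr. Qed.

Lemma qpoch_key (a q : C) N :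
  qpoch (a * q) q N = qpoch a q N + a * qpoch (a * q) q N.-1 * (1 - q ^+ N).
Proof.
case: N => [|n]; first by rewrite /qpoch !big_ord0 expr0 subrr mulr0 addr0.
rewrite /= [qpoch a q _]qpochSl qpochSr -mulrA -exprS; ring.
Qed.

Variables (a b g q : C).
Hypothesis hb1 : 1 - b != 0.
Hypothesis hg1 : 1 - g != 0.
Hypothesis hbq : forall n, qpoch (b * q) q n != 0.
Hypothesis hgq : forall n, qpoch (g * q) q n != 0.
Hypothesis hbn : forall n, qpoch b q n != 0.
Hypothesis hgn : forall n, qpoch g q n != 0.
Hypothesis hqq : forall n, qpoch q q n != 0.
Hypothesis hqn : forall n, 1 - q * q ^+ n != 0.

Definition A r s := qpoch (a * q) q (2 * r + s).-1.
Definition D6 r s := qpoch b q (r + s) * qpoch q q r * qpoch q q s.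
Definition D7 r s := qpoch b q r * qpoch g q s * qpoch q q r * qpoch q q s.

Ltac idx := rewrite /A; (have -> : forall r s, (2 * r.+1 + s).-1 = (2 * r + s).+1 by move=> *; lia);
  rewrite [qpoch (a * q) _ _]qpochSl -[a * q * q]mulrA -expr2.

Ltac xcase := case=> [|r] s; first by rewrite /fps2_mulx /= expr0 subrr !(mulr0, mul0r).
Ltac ycase := move=> r; case=> [|s]; first by rewrite /fps2_muly /= expr0 subrr !(mulr0, mul0r).
Ltac fin := by field; rewrite ?hb1 ?hg1 ?hbq ?hgq ?hqq ?hqn ?hbn ?hgn.
Ltac xprep r := rewrite /fps2_mulx /fps2_substx /fps2_substy /H6 /H7 /D6 /D7 [q ^+ r.+1]exprS; idx;
  rewrite [qpoch q q r.+1]qpochSr.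
Ltac yprep s := rewrite /fps2_muly /fps2_substx /fps2_substy /H6 /H7 /D6 /D7 [q ^+ s.+1]exprS /A;
  (have -> : forall r s, (2 * r + s.+1).-1 = (2 * r + s) by move=> *; lia);
  rewrite [qpoch q q s.+1]qpochSr.

Lemma T1 : forall r s, (a * (1 - a * q) / (1 - b)) * fps2_mulx (H6 (a * q ^+ 2) (b * q) q) r s
  = a * A r s * (1 - q ^+ r) / D6 r s.
Proof. xcase. xprep r. rewrite addSn [qpoch b _ _]qpochSl. fin. Qed.
Lemma T2 : forall r s, (a * q * (1 - a * q) / (1 - b)) * fps2_mulx (fps2_substx q (H6 (a * q ^+ 2) (b * q) q)) r s
  = a * A r s * (q ^+ r * (1 - q ^+ r)) / D6 r s.
Proof. xcase. xprep r. rewrite addSn [qpoch b _ _]qpochSl. fin. Qed.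
Lemma T3 : forall r s, (a / (1 - b)) * fps2_muly (fps2_substx (q ^+ 2) (H6 (a * q) (b * q) q)) r s
  = a * A r s * ((q ^+ 2) ^+ r * (1 - q ^+ s)) / D6 r s.
Proof. ycase. yprep s. rewrite addnS [qpoch b _ _]qpochSl. fin. Qed.
Lemma T4 : forall r s, (a / (1 - b)) * fps2_muly (H6 (a * q) (b * q) q) r s
  = a * A r s * (1 - q ^+ s) / D6 r s.
Proof. ycase. yprep s. rewrite addnS [qpoch b _ _]qpochSl. fin. Qed.
Lemma T5 : forall r s, (a * q * (1 - a * q) / (1 - b)) *
   fps2_mulx (fps2_substx q (fps2_substy q (H6 (a * q ^+ 2) (b * q) q))) r s
  = a * A r s * (q ^+ r * q ^+ s * (1 - q ^+ r)) / D6 r s.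
Proof. xcase. xprep r. rewrite addSn [qpoch b _ _]qpochSl. fin. Qed.
Lemma T6 : forall r s, (a * (1 - a * q) / (1 - b)) *
   fps2_mulx (fps2_substy q (H6 (a * q ^+ 2) (b * q) q)) r s
  = a * A r s * (q ^+ s * (1 - q ^+ r)) / D6 r s.
Proof. xcase. xprep r. rewrite addSn [qpoch b _ _]qpochSl. fin. Qed.

Lemma U1 : forall r s, (a * (1 - a * q) / (1 - b)) * fps2_mulx (H7 (a * q ^+ 2) (b * q) g q) r s
  = a * A r s * (1 - q ^+ r) / D7 r s.
Proof. xcase. xprep r. rewrite [qpoch b q _.+1]qpochSl. fin. Qed.
Lemma U2 : forall r s, (a * q * (1 - a * q) / (1 - b)) * fps2_mulx (fps2_substx q (H7 (a * q ^+ 2) (b * q) g q)) r s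
  = a * A r s * (q ^+ r * (1 - q ^+ r)) / D7 r s.
Proof. xcase. xprep r. rewrite [qpoch b q _.+1]qpochSl. fin. Qed.
Lemma U3 : forall r s, (a / (1 - g)) * fps2_muly (fps2_substx (q ^+ 2) (H7 (a * q) b (g * q) q)) r s
  = a * A r s * ((q ^+ 2) ^+ r * (1 - q ^+ s)) / D7 r s.
Proof. ycase. yprep s. rewrite [qpoch g q _.+1]qpochSl. fin. Qed.
Lemma U4 : forall r s, (a / (1 - g)) * fps2_muly (H7 (a * q) b (g * q) q) r s
  = a * A r s * (1 - q ^+ s) / D7 r s.
Proof. ycase. yprep s. rewrite [qpoch g q _.+1]qpochSl. fin. Qed.
Lemma U5 : forall r s, (a * q * (1 - a * q) / (1 - b)) *
   fps2_mulx (fps2_substx q (fps2_substy q (H7 (a * q ^+ 2) (b * q) g q))) r s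
  = a * A r s * (q ^+ r * q ^+ s * (1 - q ^+ r)) / D7 r s.
Proof. xcase. xprep r. rewrite [qpoch b q _.+1]qpochSl. fin. Qed.
Lemma U6 : forall r s, (a * (1 - a * q) / (1 - b)) *
   fps2_mulx (fps2_substy q (H7 (a * q ^+ 2) (b * q) g q)) r s
  = a * A r s * (q ^+ s * (1 - q ^+ r)) / D7 r s.
Proof. xcase. xprep r. rewrite [qpoch b q _.+1]qpochSl. fin. Qed.

Lemma pw r s : q ^+ (2 * r + s) = q ^+ r * q ^+ r * q ^+ s.
Proof. by rewrite exprD mul2n -addnn exprD. Qed.
Lemma pw2 r : (q ^+ 2) ^+ r = q ^+ r * q ^+ r.
Proof. by rewrite exprAC expr2. Qed.

Lemma L6 : forall r s, H6 (a * q) b q r s = a * A r s * (1 - q ^+ (2 * r + s)) / D6 r s + H6 a b q r s.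
Proof. move=> r s; rewrite /H6 /A /D6 qpoch_key; ring. Qed.
Lemma L7 : forall r s, H7 (a * q) b g q r s = a * A r s * (1 - q ^+ (2 * r + s)) / D7 r s + H7 a b g q r s.
Proof. move=> r s; rewrite /H7 /A /D7 qpoch_key; ring. Qed.

Lemma main6 :
  [/\ H6 (a * q) b q =
        H6 a b q
        +f (a * (1 - a * q) / (1 - b)) *f fps2_mulx (H6 (a * q ^+ 2) (b * q) q)
        +f (a * q * (1 - a * q) / (1 - b)) *f
              fps2_mulx (fps2_substx q (H6 (a * q ^+ 2) (b * q) q))
        +f (a / (1 - b)) *f fps2_muly (fps2_substx (q ^+ 2) (H6 (a * q) (b * q) q)),
      H6 (a * q) b q =
        H6 a b q
        +f (a / (1 - b)) *f fps2_muly (H6 (a * q) (b * q) q)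
        +f (a * q * (1 - a * q) / (1 - b)) *f
              fps2_mulx (fps2_substx q (fps2_substy q (H6 (a * q ^+ 2) (b * q) q)))
        +f (a * (1 - a * q) / (1 - b)) *f
              fps2_mulx (fps2_substy q (H6 (a * q ^+ 2) (b * q) q)),
      H7 (a * q) b g q =
        H7 a b g q
        +f (a * (1 - a * q) / (1 - b)) *f fps2_mulx (H7 (a * q ^+ 2) (b * q) g q)
        +f (a * q * (1 - a * q) / (1 - b)) *f
              fps2_mulx (fps2_substx q (H7 (a * q ^+ 2) (b * q) g q))
        +f (a / (1 - g)) *f fps2_muly (fps2_substx (q ^+ 2) (H7 (a * q) b (g * q) q))
    & H7 (a * q) b g q =
        H7 a b g q
        +f (a / (1 - g)) *f fps2_muly (H7 (a * q) b (g * q) q)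
        +f (a * q * (1 - a * q) / (1 - b)) *f
              fps2_mulx (fps2_substx q (fps2_substy q (H7 (a * q ^+ 2) (b * q) g q)))
        +f (a * (1 - a * q) / (1 - b)) *f
              fps2_mulx (fps2_substy q (H7 (a * q ^+ 2) (b * q) g q))].
Proof.
split; apply: functional_extensionality => r; apply: functional_extensionality => s;
  rewrite /fps2_add /fps2_scale ?T1 ?T2 ?T3 ?T4 ?T5 ?T6 ?U1 ?U2 ?U3 ?U4 ?U5 ?U6 ?L6 ?L7 pw ?pw2; ring.
Qed.
End Alg.

Lemma qpoch_neq0 (C : fieldType) (x q : C) n : (forall k, 1 - x * q ^+ k != 0) -> qpoch x q n != 0.
Proof. by move=> h; apply/prodf_neq0 => i _; apply: h. Qed.

Local Open Scope complex_scope.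
Theorem theorem2p1 (R : realType) (q a b g : R[i])
  (hq0 : 0 < `|q|) (hq1 : `|q| < 1)
  (hb : forall n : nat, b != q ^- n) (hg : forall n : nat, g != q ^- n) :
  [/\ H6 (a * q) b q =
        H6 a b q
        +f (a * (1 - a * q) / (1 - b)) *f fps2_mulx (H6 (a * q ^+ 2) (b * q) q)
        +f (a * q * (1 - a * q) / (1 - b)) *f
              fps2_mulx (fps2_substx q (H6 (a * q ^+ 2) (b * q) q))
        +f (a / (1 - b)) *f fps2_muly (fps2_substx (q ^+ 2) (H6 (a * q) (b * q) q)),
      H6 (a * q) b q =
        H6 a b q
        +f (a / (1 - b)) *f fps2_muly (H6 (a * q) (b * q) q)
        +f (a * q * (1 - a * q) / (1 - b)) *f
              fps2_mulx (fps2_substx q (fps2_substy q (H6 (a * q ^+ 2) (b * q) q)))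
        +f (a * (1 - a * q) / (1 - b)) *f
              fps2_mulx (fps2_substy q (H6 (a * q ^+ 2) (b * q) q)),
      H7 (a * q) b g q =
        H7 a b g q
        +f (a * (1 - a * q) / (1 - b)) *f fps2_mulx (H7 (a * q ^+ 2) (b * q) g q)
        +f (a * q * (1 - a * q) / (1 - b)) *f
              fps2_mulx (fps2_substx q (H7 (a * q ^+ 2) (b * q) g q))
        +f (a / (1 - g)) *f fps2_muly (fps2_substx (q ^+ 2) (H7 (a * q) b (g * q) q))
    & H7 (a * q) b g q =
        H7 a b g q
        +f (a / (1 - g)) *f fps2_muly (H7 (a * q) b (g * q) q)
        +f (a * q * (1 - a * q) / (1 - b)) *f
              fps2_mulx (fps2_substx q (fps2_substy q (H7 (a * q ^+ 2) (b * q) g q)))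
        +f (a * (1 - a * q) / (1 - b)) *f
              fps2_mulx (fps2_substy q (H7 (a * q ^+ 2) (b * q) g q))].
Proof.
have q0 : q != 0 by rewrite -normr_gt0.
have hx : forall x : R[i], (forall n : nat, x != q ^- n) -> forall k, 1 - x * q ^+ k != 0.
  move=> x hx k; rewrite subr_eq0; apply/eqP => e; move: (hx k) => /eqP; apply.
  have qk : q ^+ k != 0 by rewrite expf_neq0.
  by rewrite -[x](mulfK qk) -e mul1r.
have hqn : forall n, 1 - q * q ^+ n != 0.
  move=> n; rewrite -exprS subr_eq0; apply/eqP => e.
  have : `|q ^+ n.+1| < 1 by rewrite normrX exprn_ilt1 // normr_ge0.
  by rewrite -e normr1 ltxx.
apply: main6.
- by move: (hx b hb 0); rewrite expr0 mulr1.
- by move: (hx g hg 0); rewrite expr0 mulr1.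
- by move=> n; apply: qpoch_neq0 => k; rewrite -mulrA -exprS; apply: hx.
- by move=> n; apply: qpoch_neq0 => k; rewrite -mulrA -exprS; apply: hx.
- by move=> n; apply: qpoch_neq0; apply: hx.
- by move=> n; apply: qpoch_neq0; apply: hx.
- by move=> n; apply: qpoch_neq0.
- exact: hqn.
Qed.
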